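(* Let $n\ge2$, $d,p,K\ge1$, $P_1,\dots,P_n\in\mathbb{R}^{d\times p}$, $G_{ij}=P_i^TP_j$, and define $G^A=\frac1n\sum_iG_{ii}$, $G^T=\frac1{n^2}\sum_i\sum_jG_{ij}$, $G^D=G^A-G^T$. Let $\xi_X,\xi_Y\in\mathbb{R}^{p\times K}$, $X_i=P_i\xi_X$, $Y_i=P_i\xi_Y\in\mathbb{R}^{d\times K}$, let $X,Y\in\mathbb{R}^{nd\times K}$ stack the $X_i$ (resp. $Y_i$) vertically, let $\bar X,\bar Y$ be the projections of the columns of $X,Y$ onto the consensus subspace $\mathcal{C}=\{(z_1,\dots,z_n):z_1=\dots=z_n\in\mathbb{R}^d\}$ (i.e. each block replaced by the agent average $\frac1n\sum_iX_i$, resp. $\frac1n\sum_iY_i$), and $X_\perp=X-\bar X$, $Y_\perp=Y-\bar Y$. Then, for $\lambda_-\le\lambda_+$, the constraints $\bar X=\bar Y$, $(Y_\perp-\lambda_-X_\perp)^T(Y_\perp-\lambda_+X_\perp)\preceq0$, $X_\perp^TY_\perp=Y_\perp^TX_\perp$ are respectively equivalent to $$(\xi_X-\xi_Y)^TG^T(\xi_X-\xi_Y)=0,\qquad(\xi_Y-\lambda_-\xi_X)^TG^D(\xi_Y-\lambda_+\xi_X)\preceq0,\qquad \xi_Y^TG^D\xi_X-\xi_X^TG^D\xi_Y=0,$$ which do not involve $n$. *)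

(* Defs.v *)
From HB Require Import structures.
From mathcomp Require Import all_boot all_order all_algebra.
Set Implicit Arguments. Unset Strict Implicit. Unset Printing Implicit Defensive.
Import Order.TTheory GRing.Theory Num.Theory.
Local Open Scope ring_scope.

Section Defs.
Variables (R : realFieldType) (n d p K : nat).
Implicit Types (P : 'I_n -> 'M[R]_(d, p)).

Definition gram P (i j : 'I_n) : 'M[R]_p := (P i)^T *m P j.
Definition GA P : 'M[R]_p := (n%:R)^-1 *: \sum_(i < n) gram P i i.
Definition GT P : 'M[R]_p :=
  ((n%:R) ^+ 2)^-1 *: \sum_(i < n) \sum_(j < n) gram P i j.
Definition GD P : 'M[R]_p := GA P - GT P.

Definition stack P (xi : 'M[R]_(p, K)) : 'M[R]_(\sum_(i < n) d, K) :=
  \mxcol_(i < n) (P i *m xi).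

Definition cons_proj (X : 'M[R]_(\sum_(i < n) d, K)) : 'M[R]_(\sum_(i < n) d, K) :=
  \mxcol_(i < n) ((n%:R)^-1 *: \sum_(j < n) submxcol X j).
End Defs.

(* M ⪯ 0 : the quadratic form of M is nonpositive (for a nonsymmetric M,
   this is the same as its symmetric part being negative semidefinite) *)
Definition nsd (R : realFieldType) (m : nat) (M : 'M[R]_m) : Prop :=
  forall v : 'cV[R]_m, (v^T *m M *m v) ord0 ord0 <= 0 :> R.

(* Main.v *)
Require Import Defs.
From HB Require Import structures.
From mathcomp Require Import all_boot all_order all_algebra.
Import Order.TTheory GRing.Theory Num.Theory.
Local Open Scope ring_scope.

Lemma zm (V : zmodType) (a b c e : V) : a - b - (c - e) = a - c - b + e.
Proof. by rewrite opprB !addrA addrAC (addrAC a). Qed.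

Section H.
Variables (R : realFieldType) (n d p K : nat) (P : 'I_n -> 'M[R]_(d, p)).
Hypothesis hn : (0 < n)%N.

Let c : R := (n%:R)^-1.
Let S := \sum_(i < n) P i.
Let Pb := c *: S.
Let Q i := P i - Pb.

Lemma nc : n%:R * c = 1.
Proof. by rewrite /c mulfV // pnatr_eq0 -lt0n. Qed.

Lemma cons_stack (xi : 'M[R]_(p, K)) :
  cons_proj (stack P xi) = \mxcol_(i < n) (Pb *m xi).
Proof.
rewrite /cons_proj /stack; apply: eq_mxcol => i.
under eq_bigr do rewrite mxcolK.
by rewrite -mulmx_suml -scalemxAl.
Qed.

Lemma perp_stack (xi : 'M[R]_(p, K)) :
  stack P xi - cons_proj (stack P xi) = \mxcol_(i < n) (Q i *m xi).
Proof. by rewrite cons_stack /stack -mxcolB; apply: eq_mxcol => i; rewrite mulmxBl. Qed.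

Lemma scale_mxcol m (a : R) (A : 'I_n -> 'M[R]_(d, m)) :
  a *: \mxcol_i A i = \mxcol_i (a *: A i).
Proof. by apply/matrixP => i j; rewrite !mxE. Qed.

Lemma lin_stack (a b : 'M[R]_(p, K)) (l : R) :
  \mxcol_(i < n) (Q i *m a) - l *: \mxcol_(i < n) (Q i *m b) =
  \mxcol_(i < n) (Q i *m (a - l *: b)).
Proof.
by rewrite scale_mxcol -mxcolB; apply: eq_mxcol => i; rewrite mulmxBr scalemxAr.
Qed.

Lemma sumQ : \sum_i (Q i)^T *m Q i = n%:R *: GD P.
Proof.
have ST : \sum_(i < n) (P i)^T = S^T by rewrite raddf_sum.
have E : \sum_i (Q i)^T *m Q i =
   \sum_i (P i)^T *m P i - S^T *m Pb - Pb^T *m S + n%:R *: (Pb^T *m Pb).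
  rewrite /Q.
  under eq_bigr do rewrite mulmxBr (raddfB trmx) /= !mulmxBl.
  rewrite !big_split /= !sumrN sumrB -mulmx_sumr -mulmx_suml sumr_const card_ord.
  by rewrite ST zm scaler_nat.
rewrite E /GD /GA /GT /gram.
have SS : \sum_(i < n) \sum_(j < n) (P i)^T *m P j = S^T *m S.
  rewrite -ST mulmx_suml; apply: eq_bigr => i _; by rewrite mulmx_sumr.
rewrite SS /Pb !linearZ /= -!scalemxAl !scalerA -/c.
rewrite !scalerN scalerDr !scalerA [c * n%:R]mulrC nc mul1r scale1r.
rewrite -exprVn -/c expr2 scalerN scalerA mulrA nc mul1r.
by rewrite subrK.
Qed.

Lemma gram_stack (a b : 'M[R]_(p, K)) :
  (\mxcol_(i < n) (Q i *m a))^T *m \mxcol_(i < n) (Q i *m b) =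
  n%:R *: (a^T *m GD P *m b).
Proof.
rewrite scalemxAl scalemxAr -sumQ mulmx_sumr mulmx_suml tr_mxcol mul_mxrow_mxcol.
by apply: eq_bigr => i _; rewrite trmx_mul !mulmxA.
Qed.

Lemma GTPb : GT P = Pb^T *m Pb.
Proof.
have ST : \sum_(i < n) (P i)^T = S^T by rewrite raddf_sum.
have SS : \sum_(i < n) \sum_(j < n) (P i)^T *m P j = S^T *m S.
  rewrite -ST mulmx_suml; apply: eq_bigr => i _; by rewrite mulmx_sumr.
rewrite /GT /gram SS /Pb !linearZ /= -!scalemxAl !scalerA -/c.
by rewrite -exprVn -/c expr2.
Qed.
End H.

Lemma mtm0 (R : realFieldType) m k (M : 'M[R]_(m,k)) : M^T *m M = 0 -> M = 0.
Proof.
move=> h; apply/matrixP => i j; have := congr1 (fun A : 'M[R]_k => A j j) h.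
rewrite !mxE => /psumr_eq0P H.
have /(_ i isT) : forall l : 'I_m, true -> M^T j l * M l j = 0.
  by apply: H => l _; rewrite !mxE -expr2 sqr_ge0.
by rewrite !mxE => /eqP; rewrite mulf_eq0 orbb => /eqP ->.
Qed.

Lemma nsdZ (R : realFieldType) m (a : R) (M : 'M[R]_m) :
  0 < a -> nsd (a *: M) <-> nsd M.
Proof.
move=> a0.
have E w : (w^T *m (a *: M) *m w) ord0 ord0 = a * (w^T *m M *m w) ord0 ord0.
  by rewrite -scalemxAr -scalemxAl mxE.
split => h v; first by have := h v; rewrite E pmulr_rle0.
by rewrite E pmulr_rle0.
Qed.

Theorem proposition9 (R : realFieldType) (n d p K : nat)
  (hn : (2 <= n)%N) (hd : (1 <= d)%N) (hp : (1 <= p)%N) (hK : (1 <= K)%N)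
  (P : 'I_n -> 'M[R]_(d, p)) (xiX xiY : 'M[R]_(p, K)) (lm lp : R)
  (hl : lm <= lp) :
  let X := stack P xiX in
  let Y := stack P xiY in
  let Xbar := cons_proj X in
  let Ybar := cons_proj Y in
  let Xp := X - Xbar in
  let Yp := Y - Ybar in
  [/\ Xbar = Ybar <-> (xiX - xiY)^T *m GT P *m (xiX - xiY) = 0,
      nsd ((Yp - lm *: Xp)^T *m (Yp - lp *: Xp)) <->
        nsd ((xiY - lm *: xiX)^T *m GD P *m (xiY - lp *: xiX)) &
      Xp^T *m Yp = Yp^T *m Xp <->
        (xiY^T *m GD P *m xiX) - (xiX^T *m GD P *m xiY) = 0].
Proof.
move=> X Y Xbar Ybar Xp Yp.
have n0 : (0 < n)%N by apply: leq_trans hn.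
have nz : (n%:R : R) != 0 by rewrite pnatr_eq0 -lt0n.
have hXp : Xp = \mxcol_i ((P i - (n%:R^-1 *: \sum_j P j)) *m xiX).
  by rewrite /Xp /X /Xbar perp_stack.
have hYp : Yp = \mxcol_i ((P i - (n%:R^-1 *: \sum_j P j)) *m xiY).
  by rewrite /Yp /Y /Ybar perp_stack.
split.
- rewrite /Xbar /Ybar /X /Y !cons_stack GTPb.
  set Pb := (n%:R^-1 *: \sum_j P j).
  split => [E|E].
  + have i0 : 'I_n := Ordinal n0.
    have := congr1 (fun A => submxcol A i0) E; rewrite /= !mxcolK => E'.
    by rewrite -!mulmxA mulmxBr E' subrr !mulmx0.
  + have : Pb *m (xiX - xiY) = 0.
      apply: mtm0; rewrite trmx_mul -!mulmxA; by rewrite -!mulmxA in E.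
    rewrite mulmxBr => /eqP; rewrite subr_eq0 => /eqP E'.
    by rewrite E'.
- rewrite hXp hYp !lin_stack gram_stack //; apply: nsdZ; by rewrite ltr0n.
- rewrite hXp hYp !gram_stack //; split => h.
  + by rewrite (scalerI nz h) subrr.
  + by move/eqP: h; rewrite subr_eq0 => /eqP ->.
Qed.
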